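(* Let $p\in(1,\infty)$, $M_0>0$, $L>0$, and let $0\le u\in C(\overline{B_1(0)}\times[0,\frac{1}{4n+M_0}])$ satisfy $|\mathcal{L}u-\partial_tu|\le M_0$ (in the viscosity sense) in $\{u>1\}$ and $|\nabla u|\le L$. Then there exists a constant $C=C(L)$ such that $$|u(0,t)-u(0,0)|\le C\quad\text{for }0\le t\le\frac{1}{4n+M_0}.$$
   Context: $\mathcal{L}v=\frac1p\Delta v+\frac{p-2}{p}\langle D^2v\frac{\nabla v}{|\nabla v|},\frac{\nabla v}{|\nabla v|}\rangle$ (normalized $p$-Laplacian); viscosity inequalities are understood via $C^2$ test functions, using $\mathcal{L}\phi-\phi_t$ where $\nabla\phi\ne0$ and $\Delta\phi+(p-2)\lambda_{\max}(D^2\phi)-\phi_t$ (if $p\ge2$), resp. $\Delta\phi+(p-2)\lambda_{\min}(D^2\phi)-\phi_t$ (if $1<p<2$), where $\nabla\phi=0$. *)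

(* Defs.v *)
From mathcomp Require Import all_boot all_order all_algebra.
From mathcomp Require Import all_classical all_reals all_analysis.
Import Order.TTheory GRing.Theory Num.Theory.
Import numFieldNormedType.Exports.
Set Implicit Arguments. Unset Strict Implicit. Unset Printing Implicit Defensive.
Local Open Scope ring_scope.

Definition ST (R : realType) (n : nat) := ('rV[R]_n * R^o)%type.

Definition enorm (R : realType) (n : nat) (v : 'rV[R]_n) : R :=
  Num.sqrt (\sum_(i < n) v 0 i ^+ 2).

Definition sdir {R : realType} {n : nat} (i : 'I_n) : ST R n :=
  (delta_mx 0 i, 0).
Definition tdir (R : realType) (n : nat) : ST R n := (0, 1).

Definition C2 (R : realType) (n : nat) (phi : ST R n -> R^o) : Prop :=
  continuous phi /\
  (forall (z v : ST R n), derivable phi z v) /\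
  (forall (v : ST R n), continuous ('D_v phi)) /\
  (forall (z v w : ST R n), derivable ('D_v phi) z w) /\
  (forall (v w : ST R n), continuous ('D_w ('D_v phi))).

Definition grad (R : realType) (n : nat) (phi : ST R n -> R^o) (z : ST R n)
  : 'rV[R]_n := \row_i ('D_(sdir i) phi z : R).
Definition hess (R : realType) (n : nat) (phi : ST R n -> R^o) (z : ST R n)
  : 'M[R]_n := \matrix_(i, j) ('D_(sdir j) ('D_(sdir i) phi) z : R).
Definition dt (R : realType) (n : nat) (phi : ST R n -> R^o) (z : ST R n) : R :=
  'D_(tdir R n) phi z.
Definition lap (R : realType) (n : nat) (phi : ST R n -> R^o) (z : ST R n) : R :=
  \tr (hess phi z).

(* normalized p-Laplacian of phi at z (meaningful where grad phi z != 0):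
   (1/p) Delta phi + (p-2)/p < D^2 phi  nu, nu >,  nu = grad/|grad| *)
Definition npLap (R : realType) (n : nat) (p : R) (phi : ST R n -> R^o)
  (z : ST R n) : R :=
  let g := grad phi z in
  p^-1 * lap phi z +
  (p - 2) / p * ((g *m hess phi z *m g^T) 0 0 / (enorm g ^+ 2)).

Definition is_lambda_max (R : realType) (n : nat) (A : 'M[R]_n) (l : R) : Prop :=
  eigenvalue A l /\ forall l', eigenvalue A l' -> l' <= l.
Definition is_lambda_min (R : realType) (n : nat) (A : 'M[R]_n) (l : R) : Prop :=
  eigenvalue A l /\ forall l', eigenvalue A l' -> l <= l'.

Definition local_max_at (R : realType) (n : nat) (f : ST R n -> R) (z0 : ST R n)
  : Prop :=
  exists r : R, 0 < r /\ forall z : ST R n,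
    enorm (z.1 - z0.1) < r -> `|z.2 - z0.2| < r -> f z <= f z0.
Definition local_min_at (R : realType) (n : nat) (f : ST R n -> R) (z0 : ST R n)
  : Prop :=
  exists r : R, 0 < r /\ forall z : ST R n,
    enorm (z.1 - z0.1) < r -> `|z.2 - z0.2| < r -> f z0 <= f z.

Definition visc_sub (R : realType) (n : nat) (p M0 : R) (u : ST R n -> R)
  (D : set (ST R n)) : Prop :=
  forall (z0 : ST R n) (phi : ST R n -> R^o), D z0 -> C2 phi ->
    local_max_at (fun z => u z - phi z) z0 ->
    (grad phi z0 != 0 -> npLap p phi z0 - dt phi z0 >= - M0) /\
    (grad phi z0 = 0 -> forall l : R,
       (if 2 <= p then is_lambda_max (hess phi z0) l
        else is_lambda_min (hess phi z0) l) ->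
       p^-1 * (lap phi z0 + (p - 2) * l) - dt phi z0 >= - M0).

Definition visc_super (R : realType) (n : nat) (p M0 : R) (u : ST R n -> R)
  (D : set (ST R n)) : Prop :=
  forall (z0 : ST R n) (phi : ST R n -> R^o), D z0 -> C2 phi ->
    local_min_at (fun z => u z - phi z) z0 ->
    (grad phi z0 != 0 -> npLap p phi z0 - dt phi z0 <= M0) /\
    (grad phi z0 = 0 -> forall l : R,
       (if 2 <= p then is_lambda_min (hess phi z0) l
        else is_lambda_max (hess phi z0) l) ->
       p^-1 * (lap phi z0 + (p - 2) * l) - dt phi z0 <= M0).

Definition visc_bounded (R : realType) (n : nat) (p M0 : R) (u : ST R n -> R)
  (D : set (ST R n)) : Prop :=
  visc_sub p M0 u D /\ visc_super p M0 u D.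

Definition cyl (R : realType) (n : nat) (T : R) : set (ST R n) :=
  [set z | enorm z.1 <= 1 /\ 0 <= z.2 <= T].
Definition cyl_int (R : realType) (n : nat) (T : R) : set (ST R n) :=
  [set z | enorm z.1 < 1 /\ 0 < z.2 < T].

(* Main.v *)
Require Import Defs.
From mathcomp Require Import all_boot all_order all_algebra.
From mathcomp Require Import all_classical all_reals all_analysis.
From mathcomp Require Import lra ring.
Import Order.TTheory GRing.Theory Num.Theory.
Import numFieldNormedType.Exports.
Local Open Scope ring_scope.
Local Open Scope classical_set_scope.
Set Implicit Arguments. Unset Strict Implicit. Unset Printing Implicit Defensive.

Lemma is_derive_aff (R : realType) (n : nat) (f : ST R n -> R^o) (a v : ST R n) (c : R) :
  (forall h : R, f (h *: v + a) = f a + h * c) -> is_derive a v f (c : R^o).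
Proof.
move=> hf.
have E : (fun h : R => h^-1 *: ((f \o shift a) (h *: v) - f a)) @ (0:R)^' --> (c : R^o).
  apply: cvg_trans (cvg_cst (c : R^o)).
  apply: near_eq_cvg; near=> h.
  have h0 : h != 0 by near: h; exact: nbhs_dnbhs_neq.
  rewrite /= hf addrC addKr /GRing.scale /= mulrA mulVf // mul1r.
  done.
 exact: dnbhs_filter.
have D : derivable f a v by apply/cvg_ex; exists (c : R^o).
constructor => //.
by apply: cvg_lim.
Unshelve. all: by end_near.
Qed.

Lemma is_derive_quad (R : realType) (n : nat) (f : ST R n -> R^o) (a v : ST R n) (c q : R) :
  (forall h : R, f (h *: v + a) = f a + h * c + h ^+ 2 * q) -> is_derive a v f (c : R^o).
Proof.
move=> hf.
have hc : (fun h : R => (c + h * q : R^o)) @ (0:R) --> (c + 0 * q : R^o).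
  apply: cvgD; first exact: cvg_cst.
  by apply: cvgMl; exact: cvg_id.
rewrite mul0r addr0 in hc.
have E : (fun h : R => h^-1 *: ((f \o shift a) (h *: v) - f a)) @ (0:R)^' --> (c : R^o).
  have hc' := cvg_trans (@cvg_fmap2 _ _ (fun h : R => (c + h * q : R^o)) _ _ (@nbhs_dnbhs _ (0:R))) hc.
  apply: cvg_trans hc'.
  apply: near_eq_cvg; near=> h.
  have h0 : h != 0 by near: h; exact: nbhs_dnbhs_neq.
  rewrite /= hf.
  have -> : f a + h * c + h ^+ 2 * q - f a = h * (c + h * q) by ring.
  by rewrite /GRing.scale /= mulrA mulVf // mul1r.
have D : derivable f a v by apply/cvg_ex; exists (c : R^o).
constructor => //.
by apply: cvg_lim.
Unshelve. all: by end_near.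
Qed.

Definition ct (R : realType) (n : nat) (z : ST R n) : R^o := z.2.

Lemma is_derive_ct (R : realType) (n : nat) (a v : ST R n) :
  is_derive a v (@ct R n) (v.2 : R^o).
Proof.
apply: is_derive_aff => h; rewrite /ct /=.
by rewrite addrC.
Qed.

Definition Q (R : realType) n (al be : 'I_n -> R) (c e : R) (z : ST R n) : R^o :=
  c + \sum_(i < n) (al i * z.1 ord0 i ^+ 2 + be i * z.1 ord0 i) + e * z.2.

Definition G (R : realType) n (al be : 'I_n -> R) (c e d : R) (m : nat) (z : ST R n) : R^o :=
  Q al be c e z + d * z.2 ^+ m.

Lemma is_derive_Q (R : realType) n (al be : 'I_n -> R) (c e : R) (a v : ST R n) :
  is_derive a v (Q al be c e)
   (\sum_(i < n) (2 * al i * a.1 ord0 i * v.1 ord0 i + be i * v.1 ord0 i) + e * v.2 : R^o).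
Proof.
apply: is_derive_quad => h.
rewrite /Q /=.
have -> : \sum_(i < n) (al i * (h *: v.1 + a.1) ord0 i ^+ 2 + be i * (h *: v.1 + a.1) ord0 i)
  = \sum_(i < n) (al i * a.1 ord0 i ^+ 2 + be i * a.1 ord0 i)
   + h * \sum_(i < n) (2 * al i * a.1 ord0 i * v.1 ord0 i + be i * v.1 ord0 i)
   + h ^+ 2 * \sum_(i < n) (al i * v.1 ord0 i ^+ 2).
  rewrite !mulr_sumr -!big_split /=; apply: eq_bigr => i _; rewrite !mxE.
move: (v.1 ord0 i) (a.1 ord0 i) (al i) (be i) => x y p q.
  have H : forall x y p q h : R, p * (h * x + y) ^+ 2 + q * (h * x + y) = p * y ^+ 2 + q * y + h * (2 * p * y * x + q * x) + h ^+ 2 * (p * x ^+ 2) by move=> *; ring.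
  exact: H.
instantiate (1 := \sum_(i < n) (al i * v.1 ord0 i ^+ 2)).
rewrite [(h *: v.2)]/GRing.scale /=.
move: (\sum_(i < n) _) (\sum_(i < n) _) (\sum_(i < n) _) => s1 s2 s3.
have H : forall c e s1 s2 s3 h x y : R, c + (s1 + h * s2 + h ^+ 2 * s3) + e * (h * x + y) = c + s1 + e * y + h * (s2 + e * x) + h ^+ 2 * s3 by move=> *; ring.
exact: H.
Qed.

Lemma G_fun (R : realType) n (al be : 'I_n -> R) (c e d : R) (m : nat) :
  G al be c e d m = Q al be c e + d *: (@ct R n) ^+ m.
Proof.
apply/funext => z; rewrite /G /=.
by rewrite exprfctE.
Qed.

Lemma is_derive_G (R : realType) n (al be : 'I_n -> R) (c e d : R) (m : nat) (a v : ST R n) :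
  is_derive a v (G al be c e d m)
   (G (fun=> 0) (fun i => 2 * al i * v.1 ord0 i) (\sum_(i < n) be i * v.1 ord0 i + e * v.2) 0 (d * m%:R * v.2) m.-1 a).
Proof.
have h1 := is_derive_Q al be c e a v.
have h2 := @is_deriveZ _ _ _ _ d a v _ (@is_deriveX _ _ _ m a v _ (is_derive_ct a v)).
have h3 := is_deriveD h1 h2.
rewrite G_fun.
apply: (is_derive_eq h3).
rewrite /G /Q /ct /=.
rewrite big_split /=.
have -> : \sum_(i < n) (0 * a.1 ord0 i ^+ 2 + 2 * al i * v.1 ord0 i * a.1 ord0 i)
   = \sum_(i < n) (2 * al i * a.1 ord0 i * v.1 ord0 i).
  apply: eq_bigr => i _; move: (al i) (v.1 ord0 i) (a.1 ord0 i) => x y z.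
  have H : forall x y z : R, 0 * z ^+ 2 + 2 * x * y * z = 2 * x * z * y by move=> *; ring.
  exact: H.
rewrite [d *: _]/GRing.scale /= [_ *: v.2]/GRing.scale /=.
move: (\sum_(i < n) _) (\sum_(i < n) _) => s1 s2.
move: (a.2 ^+ m.-1) => w.
have H : forall s1 s2 e x d y w z : R, s2 + s1 + e * x + d * (y * w * x) = s1 + e * x + s2 + 0 * z + d * y * x * w by move=> *; ring.
exact: H.
Qed.

Lemma cont_snd (R : realType) n : continuous (fun z : ST R n => (z.2 : R^o)).
Proof. move=> z; exact: cvg_snd. Qed.

Lemma cont_cx (R : realType) n (i : 'I_n) : continuous (fun z : ST R n => (z.1 ord0 i : R^o)).
Proof.
move=> z.
apply: (continuous_comp (f := fst) (g := fun M : 'rV[R]_n => (M ord0 i : R^o))).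
  exact: cvg_fst.
exact: coord_continuous.
Qed.

Lemma continuous_G (R : realType) n (al be : 'I_n -> R) (c e d : R) (m : nat) :
  continuous (G al be c e d m).
Proof.
move=> z.
rewrite /G /Q.
have hx : forall i, continuous (fun z : ST R n => (z.1 ord0 i : R^o)) by move=> i; exact: cont_cx.
have ht := @cont_snd R n.
apply: cvgD; last by apply: cvgM; [exact: cvg_cst | exact: (continuous_comp (ht z) (@exprn_continuous R m _))].
apply: cvgD; last by apply: cvgM; [exact: cvg_cst | exact: ht].
apply: cvgD; first exact: cvg_cst.
have ac : continuous (fun x : R^o * R^o => x.1 + x.2) by exact: add_continuous.
apply: (@cvg_big _ _ +%R 0 _ ac) => // i _.
apply: cvgD; apply: cvgM; try exact: cvg_cst.
  exact: (continuous_comp (hx i z) (@exprn_continuous R 2 _)).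
exact: hx.
Qed.

Lemma derive_G (R : realType) n (al be : 'I_n -> R) (c e d : R) (m : nat) (v : ST R n) :
  'D_v (G al be c e d m) =
   G (fun=> 0) (fun i => 2 * al i * v.1 ord0 i) (\sum_(i < n) be i * v.1 ord0 i + e * v.2) 0 (d * m%:R * v.2) m.-1.
Proof.
apply/funext => a.
by rewrite (@derive_val _ _ _ _ _ _ _ (is_derive_G al be c e d m a v)).
Qed.

Lemma derivable_G (R : realType) n (al be : 'I_n -> R) (c e d : R) (m : nat) (a v : ST R n) :
  derivable (G al be c e d m) a v.
Proof. exact: (@ex_derive _ _ _ _ _ _ _ (is_derive_G al be c e d m a v)). Qed.

Lemma C2_G (R : realType) n (al be : 'I_n -> R) (c e d : R) (m : nat) :
  C2 (G al be c e d m).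
Proof.
split; first exact: continuous_G.
split; first by move=> z v; exact: derivable_G.
split; first by move=> v; rewrite derive_G; exact: continuous_G.
split; first by move=> z v w; rewrite derive_G; exact: derivable_G.
by move=> v w; rewrite !derive_G; exact: continuous_G.
Qed.

Lemma derive_G_at (R : realType) n (al be : 'I_n -> R) (c e d : R) (m : nat) (a v : ST R n) :
  'D_v (G al be c e d m) a =
   G (fun=> 0) (fun i => 2 * al i * v.1 ord0 i) (\sum_(i < n) be i * v.1 ord0 i + e * v.2) 0 (d * m%:R * v.2) m.-1 a.
Proof. exact: (congr1 (fun f => f a) (derive_G al be c e d m v)). Qed.

Definition phi (R : realType) n (a0 e d : R) (m : nat) : ST R n -> R^o :=
  G (fun=> a0) (fun=> 0) 0 e d m.

Lemma delta_e (R : realType) n (i j : 'I_n) : (delta_mx 0 i : 'rV[R]_n) ord0 j = (i == j)%:R.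
Proof. by rewrite mxE eqxx /= eq_sym. Qed.

Lemma sum_delta (R : realType) n (i : 'I_n) (f : 'I_n -> R) :
  \sum_(j < n) (i == j)%:R * f j = f i.
Proof.
rewrite (bigD1 i) //= big1 => [|j ji]; first by rewrite eqxx mul1r addr0.
by rewrite eq_sym (negbTE ji) mul0r.
Qed.

Lemma sum0f (R : realType) n (f : 'I_n -> R) : \sum_(j < n) 0 * f j = 0.
Proof. by rewrite big1 // => j _; rewrite mul0r. Qed.

Lemma sum_delta2 (R : realType) n (i : 'I_n) (g f : 'I_n -> R) (c : R) :
  \sum_(j < n) (0 * g j + c * (delta_mx 0 i : 'rV[R]_n) ord0 j * f j) = c * f i.
Proof.
rewrite -(sum_delta i (fun j => c * f j)); apply: eq_bigr => j _.
by rewrite delta_e mul0r add0r mulrCA mulrA.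
Qed.

Lemma grad_phi (R : realType) n (a0 e d : R) (m : nat) (z : ST R n) :
  grad (@phi R n a0 e d m) z = (2 * a0) *: z.1.
Proof.
apply/rowP => i; rewrite /grad mxE /phi derive_G_at /G /Q /=.
rewrite sum0f sum_delta2 !mxE.
by rewrite !(mul0r, mulr0, add0r, addr0).
Qed.

Lemma sum_dd (R : realType) n (i j : 'I_n) (c : R) :
  \sum_(k < n) c * (delta_mx 0 i : 'rV[R]_n) ord0 k * (delta_mx 0 j : 'rV[R]_n) ord0 k = c * (j == i)%:R.
Proof.
rewrite -(sum_delta i (fun k => c * (j == k)%:R)); apply: eq_bigr => k _.
by rewrite !delta_e mulrCA mulrA.
Qed.

Lemma hess_phi (R : realType) n (a0 e d : R) (m : nat) (z : ST R n) :
  hess (@phi R n a0 e d m) z = (2 * a0)%:M.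
Proof.
apply/matrixP => i j; rewrite /hess mxE /phi.
rewrite (derive_G _ _ _ _ _ _ (sdir i)) derive_G_at /G /Q /=.
rewrite sum_dd sum_delta2 !mxE eq_sym.
rewrite !(mul0r, mulr0, add0r, addr0).
by case: (i == j); rewrite ?mulr1 ?mulr0.
Qed.

Lemma dt_phi (R : realType) n (a0 e d : R) (m : nat) (z : ST R n) :
  dt (@phi R n a0 e d m) z = e + d * m%:R * z.2 ^+ m.-1.
Proof.
rewrite /dt /phi derive_G_at /G /Q /=.
rewrite sum0f.
under eq_bigr do rewrite mxE mulr0 mul0r addr0.
rewrite sum0f.
by rewrite !(mul0r, mulr0, add0r, addr0, mulr1).
Qed.

Lemma lap_phi (R : realType) n (a0 e d : R) (m : nat) (z : ST R n) :
  lap (@phi R n a0 e d m) z = 2 * a0 * n%:R.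
Proof. by rewrite /lap hess_phi mxtrace_scalar mulr_natr. Qed.

Lemma eig_phi (R : realType) n (a0 e d : R) (m : nat) (z : ST R n) (l : R) :
  eigenvalue (hess (@phi R n a0 e d m) z) l -> l = 2 * a0.
Proof.
rewrite hess_phi => /eigenvalueP [v].
rewrite mul_mx_scalar => /eqP; rewrite -subr_eq0 -scalerBl scaler_eq0 subr_eq0.
by case/orP => [/eqP -> //|/eqP ->]; rewrite eqxx.
Qed.

Lemma enorm_sq (R : realType) n (g : 'rV[R]_n) : enorm g ^+ 2 = \sum_(k < n) g ord0 k ^+ 2.
Proof. by rewrite /enorm sqr_sqrtr // sumr_ge0 // => k _; exact: sqr_ge0. Qed.

Lemma sumsq_eq0 (R : realType) n (g : 'rV[R]_n) : \sum_(k < n) g ord0 k ^+ 2 = 0 -> g = 0.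
Proof.
move=> /eqP; rewrite psumr_eq0 => [/allP H|k _]; last exact: sqr_ge0.
apply/rowP => k; rewrite mxE.
have := H k (mem_index_enum _); rewrite /= sqrf_eq0 => /eqP gk.
exact: gk.
Qed.

Lemma npLap_phi (R : realType) n (p a0 e d : R) (m : nat) (z : ST R n) :
  grad (@phi R n a0 e d m) z != 0 ->
  npLap p (@phi R n a0 e d m) z = p^-1 * (2 * a0 * n%:R) + (p - 2) / p * (2 * a0).
Proof.
move=> g0; rewrite /npLap lap_phi hess_phi.
set g := grad _ z.
rewrite mul_mx_scalar -scalemxAl mxE enorm_sq.
have -> : (g *m g^T) 0 0 = \sum_(k < n) g ord0 k ^+ 2.
  by rewrite mxE; apply: eq_bigr => k _; rewrite [g^T _ _]mxE expr2.
have s0 : \sum_(k < n) g ord0 k ^+ 2 != 0.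
  by apply/eqP => /sumsq_eq0 /eqP; rewrite (negbTE g0).
by rewrite -(mulrA (2 * a0)) mulfV // mulr1.
Qed.

Lemma eig_scalar (R : realType) n (c : R) : (0 < n)%N -> eigenvalue ((c%:M) : 'M[R]_n) c.
Proof.
move=> hn; apply/eigenvalueP; exists (const_mx 1); first by rewrite mul_mx_scalar.
apply/eqP => /rowP /(_ (Ordinal hn)); rewrite !mxE => /eqP; by rewrite oner_eq0.
Qed.

Lemma hlam (R : realType) n (p a0 e d : R) (m : nat) (z : ST R n) : (0 < n)%N ->
  (if 2 <= p then is_lambda_max (hess (@phi R n a0 e d m) z) (2 * a0)
   else is_lambda_min (hess (@phi R n a0 e d m) z) (2 * a0)).
Proof.
move=> hn.
have E : eigenvalue (hess (@phi R n a0 e d m) z) (2 * a0) by rewrite hess_phi; exact: eig_scalar.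
case: ifP => _; split => // l' /eig_phi ->; exact: lexx.
Qed.

Lemma sub_false (R : realType) n (p M0 : R) (u : ST R n -> R) (D : set (ST R n))
   (a0 e d : R) (m : nat) (z0 : ST R n) :
  (0 < n)%N -> visc_sub p M0 u D -> D z0 ->
  local_max_at (fun z => u z - @phi R n a0 e d m z) z0 ->
  p^-1 * (2 * a0 * n%:R) + (p - 2) / p * (2 * a0) - (e + d * m%:R * z0.2 ^+ m.-1) < - M0 -> False.
Proof.
move=> hn Hs Dz Hm Hlt.
have [h1 h2] := Hs z0 (@phi R n a0 e d m) Dz (C2_G _ _ _ _ _ _) Hm.
case: (eqVneq (grad (@phi R n a0 e d m) z0) 0) => [g0|g0].
  have := h2 g0 _ (@hlam R n p a0 e d m z0 hn); rewrite lap_phi dt_phi.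
  have -> : p^-1 * (2 * a0 * n%:R + (p - 2) * (2 * a0)) = p^-1 * (2 * a0 * n%:R) + (p - 2) / p * (2 * a0) by ring.
  lra.
have := h1 g0; rewrite npLap_phi // dt_phi; lra.
Qed.

Lemma super_false (R : realType) n (p M0 : R) (u : ST R n -> R) (D : set (ST R n))
   (a0 e d : R) (m : nat) (z0 : ST R n) :
  (0 < n)%N -> visc_super p M0 u D -> D z0 ->
  local_min_at (fun z => u z - @phi R n a0 e d m z) z0 ->
  M0 < p^-1 * (2 * a0 * n%:R) + (p - 2) / p * (2 * a0) - (e + d * m%:R * z0.2 ^+ m.-1) -> False.
Proof.
move=> hn Hs Dz Hm Hlt.
have [h1 h2] := Hs z0 (@phi R n a0 e d m) Dz (C2_G _ _ _ _ _ _) Hm.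
case: (eqVneq (grad (@phi R n a0 e d m) z0) 0) => [g0|g0].
  have hl : (if 2 <= p then is_lambda_min (hess (@phi R n a0 e d m) z0) (2 * a0)
   else is_lambda_max (hess (@phi R n a0 e d m) z0) (2 * a0)).
    have E : eigenvalue (hess (@phi R n a0 e d m) z0) (2 * a0) by rewrite hess_phi; exact: eig_scalar.
    case: ifP => _; split => // l' /eig_phi ->; exact: lexx.
  have := h2 g0 _ hl; rewrite lap_phi dt_phi.
  have -> : p^-1 * (2 * a0 * n%:R + (p - 2) * (2 * a0)) = p^-1 * (2 * a0 * n%:R) + (p - 2) / p * (2 * a0) by ring.
  lra.
have := h1 g0; rewrite npLap_phi // dt_phi; lra.
Qed.

Lemma sumsq_ge0 (R : realType) n (x : 'rV[R]_n) : 0 <= \sum_(k < n) x ord0 k ^+ 2.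
Proof. by apply: sumr_ge0 => k _; exact: sqr_ge0. Qed.

Lemma enorm_ge0 (R : realType) n (x : 'rV[R]_n) : 0 <= enorm x.
Proof. exact: sqrtr_ge0. Qed.

Lemma enorm0 (R : realType) n : enorm (0 : 'rV[R]_n) = 0.
Proof. by rewrite /enorm big1 ?sqrtr0 // => k _; rewrite mxE expr0n. Qed.

Lemma enorm_le1 (R : realType) n (x : 'rV[R]_n) : (enorm x <= 1) = (\sum_(k < n) x ord0 k ^+ 2 <= 1).
Proof. by rewrite /enorm -{1}sqrtr1 ler_sqrt. Qed.

Lemma coord_le_enorm (R : realType) n (x : 'rV[R]_n) k : `|x ord0 k| <= enorm x.
Proof.
rewrite -sqrtr_sqr /enorm ler_sqrt ?sumsq_ge0 //.
rewrite (bigD1 k) //= lerDl; apply: sumr_ge0 => j _; exact: sqr_ge0.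
Qed.

Lemma phiE (R : realType) n (a0 e d : R) (m : nat) (z : ST R n) :
  @phi R n a0 e d m z = a0 * enorm z.1 ^+ 2 + e * z.2 + d * z.2 ^+ m.
Proof.
rewrite /phi /G /Q enorm_sq add0r mulr_sumr; congr (_ + _ + _).
by apply: eq_bigr => k _; rewrite mul0r addr0.
Qed.

Lemma enorm_near (R : realType) n (x : 'rV[R]_n) : enorm x < 1 ->
  exists2 r : R, 0 < r & forall y, enorm (y - x) < r -> enorm y <= 1.
Proof.
move=> hx.
have s1 : \sum_(k < n) x ord0 k ^+ 2 < 1.
  by move: hx; rewrite /enorm -[X in _ < X]sqrtr1 ltr_sqrt ?ltr01.
set s := \sum_(k < n) _ in s1.
have hn : 0 < 3 * n.+1%:R :> R by [].
exists (Num.min 1 ((1 - s) / (3 * n.+1%:R))).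
  by rewrite lt_min ltr01 /= divr_gt0 // subr_gt0.
move=> y hy.
set r := Num.min _ _ in hy.
have r1 : r <= 1 by rewrite /r ge_min lexx.
have r2 : r <= (1 - s) / (3 * n.+1%:R) by rewrite /r ge_min lexx orbT.
have r0 : 0 <= r by apply: le_trans (enorm_ge0 _) (ltW hy).
have r3 : r * (3 * n.+1%:R) <= 1 - s by rewrite -ler_pdivlMr.
rewrite enorm_le1.
have H : forall k, y ord0 k ^+ 2 <= x ord0 k ^+ 2 + 3 * r.
  move=> k.
  have hb := le_lt_trans (coord_le_enorm (y - x) k) hy.
  have ha := le_trans (coord_le_enorm x k) (ltW hx).
  rewrite !mxE in hb.
  move: hb ha; rewrite !ltr_norml !ler_norml => /andP[hb1 hb2] /andP[ha1 ha2].
  have -> : y ord0 k = x ord0 k + (y ord0 k - x ord0 k) by ring.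
  move: (x ord0 k) (y ord0 k - x ord0 k) hb1 hb2 ha1 ha2 => a b *; nra.
apply: le_trans (ler_sum _ (fun k _ => H k)) _.
rewrite big_split /= -/s sumr_const card_ord -mulr_natr.
have : (n%:R : R) <= n.+1%:R by rewrite ler_nat.
nra.
Qed.

Lemma ball_compact (R : realType) n : compact [set x : 'rV[R]_n | enorm x <= 1].
Proof.
apply: bounded_closed_compact.
  exists 1; split => // M M1 x /= hx.
  rewrite [leLHS]/Num.norm /= mx_normrE.
  apply: bigmax_le => [|[i j] _ /=]; first by apply: le_trans (ltW M1).
  rewrite (ord1 i); apply: le_trans (ltW M1).
  exact: le_trans (coord_le_enorm x j) hx.
have -> : [set x : 'rV[R]_n | enorm x <= 1] =
   (fun x : 'rV[R]_n => \sum_(k < n) x ord0 k ^+ 2) @^-1` [set r : R | r <= 1].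
  by apply/seteqP; split => x /=; rewrite enorm_le1.
apply: preimage_closed; last exact: closed_le.
move=> x _.
have ac : continuous (fun x : R * R => x.1 + x.2) by exact: add_continuous.
apply: (@cvg_big _ _ +%R 0 _ ac _ (nbhs x)) => k _.
apply: cvgM; exact: coord_continuous.
Qed.

Lemma cyl_compact (R : realType) n (t : R) : compact (@cyl R n t).
Proof.
have -> : @cyl R n t = [set x : 'rV[R]_n | enorm x <= 1] `*` [set s : R^o | 0 <= s <= t].
  by apply/seteqP; split => z.
apply: compact_setX; first exact: ball_compact.
have -> : [set s : R^o | 0 <= s <= t] = `[0, t]%classic.
  by apply/seteqP; split => s; rewrite /= in_itv.
exact: segment_compact.
Qed.

Lemma core (R : realType) n (T t1 L K d : R) (m : nat) (w : ST R n -> R) (good : ST R n -> Prop) :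
  (0 < n)%N -> 0 < L -> 0 < t1 -> t1 <= T -> (0 < m)%N ->
  {within @cyl R n T, continuous w} ->
  (forall x y t, enorm x <= 1 -> enorm y <= 1 -> 0 <= t <= T ->
     `|w (x,t) - w (y,t)| <= L * enorm (x - y)) ->
  (forall z0, @cyl_int R n T z0 -> good z0 ->
     local_max_at (fun z => w z - @phi R n (2 * L) K d m z) z0 -> False) ->
  (forall x, enorm x <= 1 -> w (x, t1) - @phi R n (2 * L) K d m (x, t1) < w (0, 0)) ->
  exists z : ST R n, [/\ enorm z.1 <= 1, 0 <= z.2 < t1, (z.2 = 0 \/ ~ good z) &
     forall y, @cyl R n t1 y -> w y - @phi R n (2 * L) K d m y <= w z - @phi R n (2 * L) K d m z].
Proof.
move=> hn hL ht1 ht1T hm hw hlip hv htop.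
set ph := @phi R n (2 * L) K d m.
set f := fun z => w z - ph z.
have sub : @cyl R n t1 `<=` @cyl R n T.
  by move=> [x s] [hx /andP[s0 s1]]; split => //; rewrite s0 /= (le_trans s1 ht1T).
have cf : {within @cyl R n t1, continuous f}.
  have cw := continuous_subspaceW sub hw.
  move=> z; apply: cvgB; first exact: cw.
  exact: (@continuous_subspaceT _ _ (@cyl R n t1) ph (@continuous_G R n _ _ _ _ _ _) z).
have ne : @cyl R n t1 !=set0.
  by exists (0, 0); split; [rewrite enorm0 ler01 | rewrite lexx /= ltW].
have [[x t] zin zmax] := compact_EVT_max ne (@cyl_compact R n t1) cf.
have zmax' : forall y, @cyl R n t1 y -> f y <= f (x, t) by move=> y hy; apply: zmax; rewrite inE.
rewrite inE in zin; case: zin => /= hx /andP[t0 tt1].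
have f00 : f (0, 0) = w (0, 0).
  by rewrite /f /ph phiE /= enorm0 expr0n /= expr0n /= eqn0Ngt hm /= !(mulr0, addr0, subr0).
have cyl00 : @cyl R n t1 (0, 0) by split; [rewrite enorm0 ler01 | rewrite lexx /= ltW].
have tlt : t < t1.
  rewrite lt_neqAle tt1 andbT; apply/eqP => tE.
  have := htop x hx; have := zmax' _ cyl00; rewrite f00 /f tE /ph; lra.
have xlt : enorm x < 1.
  rewrite lt_neqAle hx andbT; apply/eqP => xE.
  have c0t : @cyl R n t1 (0, t) by split; [rewrite enorm0 ler01 | rewrite t0 tt1].
  have := zmax' _ c0t; rewrite /f /ph !phiE /= xE enorm0.
  have e01 : enorm (0 : 'rV[R]_n) <= 1 by rewrite enorm0 ler01.
  have := hlip x 0 t hx e01.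
  rewrite t0 (le_trans tt1 ht1T) subr0 xE => /(_ isT).
  rewrite ler_norml => /andP[h1 h2].
  have -> : (0 : R) ^+ 2 = 0 by rewrite expr0n.
  lra.
exists (x, t); split => //=; first by rewrite t0 tlt.
case: (pselect (good (x, t))) => hg; last by right.
left; apply/eqP; apply: contraT => tn0.
have tpos : 0 < t by rewrite lt_neqAle eq_sym tn0 t0.
exfalso; apply: (hv (x, t)) => //.
  by split => //=; rewrite tpos (lt_le_trans tlt ht1T).
have [r r0 hr] := enorm_near xlt.
exists (Num.min r (Num.min t (t1 - t))); split.
  by rewrite !lt_min r0 tpos subr_gt0 tlt.
move=> [y s] /=; rewrite !lt_min => /andP[hy _] /andP[hs1 /andP[hs2 hs3]].
apply: zmax'; split => /=; first exact: hr.
move: hs2 hs3; rewrite !ltr_norml => /andP[a1 a2] /andP[b1 b2].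
apply/andP; split; lra.
Qed.

Lemma pow_small (R : realType) (q eps : R) : 0 <= q < 1 -> 0 < eps ->
  exists m : nat, (0 < m)%N /\ q ^+ m < eps.
Proof.
move=> /andP[q0 q1] e0.
have hq : `|q| < 1 by rewrite ger0_norm.
have := cvg_expr hq.
move=> /cvgrPdist_lt /(_ _ e0) [N _ HN].
exists N.+1; split => //.
have := HN N.+1 (leqnSn N).
by rewrite sub0r normrN ger0_norm // exprn_ge0.
Qed.

Lemma choose_dm (R : realType) (Q t1 s : R) : 0 < Q -> 0 < t1 -> 0 <= s < t1 ->
  exists m : nat, exists d : R, [/\ (0 < m)%N, 0 <= d, d * t1 ^+ m = Q & d * s ^+ m <= 1].
Proof.
move=> Q0 t0 /andP[s0 st].
have hq : 0 <= s / t1 < 1.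
  by apply/andP; split; [exact: divr_ge0 s0 (ltW t0) | rewrite ltr_pdivrMr // mul1r].
have Qi : 0 < Q^-1 by rewrite invr_gt0.
have [m [m0 hm]] := pow_small hq Qi.
have tm0 : 0 < t1 ^+ m by exact: exprn_gt0.
exists m, (Q / t1 ^+ m); split => //.
- by rewrite divr_ge0 ?ltW.
- by rewrite -mulrA mulVf ?mulr1 // gt_eqF.
- rewrite expr_div_n in hm.
  have -> : Q / t1 ^+ m * s ^+ m = Q * (s ^+ m / t1 ^+ m) by ring.
  have QQ : Q * Q^-1 = 1 by rewrite mulfV // gt_eqF.
  move: hm; set X := _ / _ => hm; nra.
Qed.

Lemma V_bound (R : realType) n (p a : R) : (0 < n)%N -> 1 < p -> 0 < a ->
  p^-1 * (2 * a * n%:R) + (p - 2) / p * (2 * a) < 2 * a * n%:R.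
Proof.
move=> hn hp ha.
have p0 : 0 < p by lra.
have n1 : 1 <= n%:R :> R by rewrite ler1n.
rewrite -(ltr_pM2r p0).
have -> : (p^-1 * (2 * a * n%:R) + (p - 2) / p * (2 * a)) * p = 2 * a * n%:R + (p - 2) * (2 * a).
  by field; rewrite gt_eqF.
have h : 0 <= (n%:R - 1) * (p - 1) by apply: mulr_ge0; lra.
have h2 : 0 <= a * ((n%:R - 1) * (p - 1)) by apply: mulr_ge0; lra.
nra.
Qed.

Lemma KT_bound (R : realType) n (M0 L s : R) : 0 < M0 -> 0 < L -> 0 <= s <= (4 * n%:R + M0)^-1 ->
  (2 * (2 * L) * n%:R + M0) * s <= L + 1.
Proof.
move=> hM hL /andP[s0 sT].
have n0 : 0 <= n%:R :> R by [].
have D0 : 0 < 4 * n%:R + M0 by lra.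
have K0 : 0 <= 2 * (2 * L) * n%:R + M0 by nra.
apply: le_trans (ler_wpM2l K0 sT) _.
rewrite ler_pdivrMr //; nra.
Qed.

Lemma Lq_bound (R : realType) (L e : R) : 0 < L -> L * e - 2 * L * e ^+ 2 <= L / 8.
Proof.
move=> hL.
have : 0 <= L * (4 * e - 1) ^+ 2 by apply: mulr_ge0; [lra | exact: sqr_ge0].
have h8 : (8 : R)^-1 * 8 = 1 by rewrite mulVf.
nra.
Qed.

Lemma upper (R : realType) n (p M0 L T t1 s : R) (u : ST R n -> R) :
  (1 <= n)%N -> 1 < p -> 0 < M0 -> 0 < L ->
  T = (4 * n%:R + M0)^-1 ->
  {within @cyl R n T, continuous u} ->
  (forall z, @cyl R n T z -> 0 <= u z) ->
  visc_sub p M0 u [set z | @cyl_int R n T z /\ 1 < u z] ->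
  (forall (x y : 'rV[R]_n) (t : R), enorm x <= 1 -> enorm y <= 1 ->
       0 <= t <= T -> `|u (x, t) - u (y, t)| <= L * enorm (x - y)) ->
  0 < t1 -> t1 <= T -> 0 <= s < t1 ->
  u (0, s) <= u (0, 0) + 2 * L + 3.
Proof.
move=> hn hp hM hL hT hc hpos hsub hlip ht1 ht1T /andP[s0 st1].
have T0 : 0 < T by rewrite hT invr_gt0; have : (0 : R) <= n%:R by []; lra.
have neT : @cyl R n T !=set0.
  by exists (0, 0); split; [rewrite enorm0 ler01 | rewrite lexx /= ltW].
have [zM _ hzM] := compact_EVT_max neT (@cyl_compact R n T) hc.
have hzM' : forall y, @cyl R n T y -> u y <= u zM by move=> y hy; apply: hzM; rewrite inE.
have c00 : @cyl R n T (0, 0) by split; [rewrite enorm0 ler01 | rewrite lexx /= ltW].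
have uM0 : 0 <= u zM by apply: le_trans (hpos _ c00) (hzM' _ c00).
have [m [d [m0 d0 dt1 ds]]] := @choose_dm R (u zM + 1) t1 s ltac:(lra) ht1 ltac:(by rewrite s0 st1).
set K := 2 * (2 * L) * n%:R + M0.
have hn' : (0 < n)%N by [].
have hV := @V_bound R n p (2 * L) hn' hp ltac:(lra).
have hv : forall z0, @cyl_int R n T z0 -> 1 < u z0 ->
     local_max_at (fun z => u z - @phi R n (2 * L) K d m z) z0 -> False.
  move=> z0 hz0 hg hlm.
  apply: (@sub_false R n p M0 u _ (2 * L) K d m z0 hn' hsub _ hlm) => //.
  have : 0 <= d * m%:R * z0.2 ^+ m.-1.
    by apply: mulr_ge0; [apply: mulr_ge0 | apply: exprn_ge0; case: hz0 => _ /andP[/ltW]].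
  rewrite /K; lra.
have htop : forall x, enorm x <= 1 -> u (x, t1) - @phi R n (2 * L) K d m (x, t1) < u (0, 0).
  move=> x hx; rewrite phiE /=.
  have cx : @cyl R n T (x, t1) by split => //=; rewrite (ltW ht1) ht1T.
  have := hzM' _ cx; have := hpos _ c00.
  have : 0 <= 2 * L * enorm x ^+ 2 by apply: mulr_ge0; [lra | exact: sqr_ge0].
  have : 0 <= K * t1 by apply: mulr_ge0; rewrite /K; [have : (0:R) <= n%:R by []; nra | lra].
  lra.
have [[x t] [/= hx /andP[t0 tt1] hcase hmax]] :=
  @core R n T t1 L K d m u (fun z => 1 < u z) hn' hL ht1 ht1T m0 hc hlip hv htop.
have c0s : @cyl R n t1 (0, s) by split; [rewrite enorm0 ler01 | rewrite s0 ltW].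
have sT : 0 <= s <= T by rewrite s0 /= (le_trans (ltW st1) ht1T).
have KT := @KT_bound R n M0 L s hM hL ltac:(by rewrite -hT).
rewrite -/K in KT.
have h8 : L / 8 <= L by rewrite ler_pdivrMr //; lra.
have := hmax _ c0s; rewrite !phiE /= enorm0 expr0n /= mulr0 add0r -/K.
have u00 := hpos _ c00.
have Ks0 : 0 <= K * s by apply: mulr_ge0; rewrite /K; [have : (0:R) <= n%:R by []; nra | lra].
case: hcase => [t0E|hg].
  rewrite t0E expr0n /= eqn0Ngt m0 /= !mulr0 !addr0.
  have e01 : enorm (0 : 'rV[R]_n) <= 1 by rewrite enorm0 ler01.
  have := hlip x 0 0 hx e01; rewrite lexx /= subr0 => /(_ (ltW T0)).
  rewrite ler_norml => /andP[h1 h2].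
  have := Lq_bound (enorm x) hL.
  lra.
have hg' : u (x, t) <= 1 by rewrite leNgt; apply/negP.
have : 0 <= 2 * L * enorm x ^+ 2 by apply: mulr_ge0; [lra | exact: sqr_ge0].
have : 0 <= K * t by apply: mulr_ge0; rewrite /K; [have : (0:R) <= n%:R by []; nra | lra].
have : 0 <= d * t ^+ m by apply: mulr_ge0 => //; exact: exprn_ge0.
lra.
Qed.

Lemma lower (R : realType) n (p M0 L T t1 s : R) (u : ST R n -> R) :
  (1 <= n)%N -> 1 < p -> 0 < M0 -> 0 < L ->
  T = (4 * n%:R + M0)^-1 ->
  {within @cyl R n T, continuous u} ->
  (forall z, @cyl R n T z -> 0 <= u z) ->
  visc_super p M0 u [set z | @cyl_int R n T z /\ 1 < u z] ->
  (forall (x y : 'rV[R]_n) (t : R), enorm x <= 1 -> enorm y <= 1 ->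
       0 <= t <= T -> `|u (x, t) - u (y, t)| <= L * enorm (x - y)) ->
  0 < t1 -> t1 <= T -> 0 <= s < t1 ->
  (forall x r, enorm x <= 1 -> 0 <= r < t1 -> 1 < u (x, r)) ->
  u (0, 0) - (2 * L + 3) <= u (0, s).
Proof.
move=> hn hp hM hL hT hc hpos hsup hlip ht1 ht1T /andP[s0 st1] hbig.
have T0 : 0 < T by rewrite hT invr_gt0; have : (0 : R) <= n%:R by []; lra.
have c00 : @cyl R n T (0, 0) by split; [rewrite enorm0 ler01 | rewrite lexx /= ltW].
have u00 := hpos _ c00.
have [m [d [m0 d0 dt1 ds]]] := @choose_dm R (u (0, 0) + 1) t1 s ltac:(lra) ht1 ltac:(by rewrite s0 st1).
set K := 2 * (2 * L) * n%:R + M0.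
have hn' : (0 < n)%N by [].
have hV := @V_bound R n p (2 * L) hn' hp ltac:(lra).
set w := fun z => - u z.
have hcw : {within @cyl R n T, continuous w} by move=> z; apply: cvgN; exact: hc.
have E : forall a b : R, - a - - b = - (a - b) by move=> *; ring.
have hlipw : forall (x y : 'rV[R]_n) (t : R), enorm x <= 1 -> enorm y <= 1 ->
       0 <= t <= T -> `|w (x, t) - w (y, t)| <= L * enorm (x - y).
  by move=> x y t hx hy ht; rewrite /w E normrN; exact: hlip.
have hv : forall z0, @cyl_int R n T z0 -> 1 < u z0 ->
     local_max_at (fun z => w z - @phi R n (2 * L) K d m z) z0 -> False.
  move=> z0 hz0 hg [r [r0 hr]].
  apply: (@super_false R n p M0 u _ (- (2 * L)) (- K) (- d) m z0 hn' hsup _).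
  - by split.
  - exists r; split => // z h1 h2; have := hr z h1 h2; rewrite /w !phiE; lra.
  have : 0 <= d * m%:R * z0.2 ^+ m.-1.
    by apply: mulr_ge0; [apply: mulr_ge0 | apply: exprn_ge0; case: hz0 => _ /andP[/ltW]].
  have -> : p^-1 * (2 * - (2 * L) * n%:R) + (p - 2) / p * (2 * - (2 * L)) =
     - (p^-1 * (2 * (2 * L) * n%:R) + (p - 2) / p * (2 * (2 * L))) by ring.
  rewrite /K; lra.
have htop : forall x, enorm x <= 1 -> w (x, t1) - @phi R n (2 * L) K d m (x, t1) < w (0, 0).
  move=> x hx; rewrite phiE /w /=.
  have cx : @cyl R n T (x, t1) by split => //=; rewrite (ltW ht1) ht1T.
  have := hpos _ cx.
  have : 0 <= 2 * L * enorm x ^+ 2 by apply: mulr_ge0; [lra | exact: sqr_ge0].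
  have : 0 <= K * t1 by apply: mulr_ge0; rewrite /K; [have : (0:R) <= n%:R by []; nra | lra].
  lra.
have [[x t] [/= hx /andP[t0 tt1] hcase hmax]] :=
  @core R n T t1 L K d m w (fun z => 1 < u z) hn' hL ht1 ht1T m0 hcw hlipw hv htop.
have c0s : @cyl R n t1 (0, s) by split; [rewrite enorm0 ler01 | rewrite s0 ltW].
have sT : 0 <= s <= T by rewrite s0 /= (le_trans (ltW st1) ht1T).
have KT := @KT_bound R n M0 L s hM hL ltac:(by rewrite -hT).
rewrite -/K in KT.
have h8 : L / 8 <= L by rewrite ler_pdivrMr //; lra.
have := hmax _ c0s; rewrite /w !phiE /= enorm0 expr0n /= mulr0 add0r -/K.
have Ks0 : 0 <= K * s by apply: mulr_ge0; rewrite /K; [have : (0:R) <= n%:R by []; nra | lra].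
case: hcase => [t0E|hg]; last by exfalso; apply: hg; apply: hbig => //; rewrite t0 tt1.
rewrite t0E expr0n /= eqn0Ngt m0 /= !mulr0 !addr0.
have e01 : enorm (0 : 'rV[R]_n) <= 1 by rewrite enorm0 ler01.
have := hlip x 0 0 hx e01; rewrite lexx /= subr0 => /(_ (ltW T0)).
rewrite ler_norml => /andP[h1 h2].
have := Lq_bound (enorm x) hL.
lra.
Qed.

Lemma path_cont (R : realType) n (T t0 e : R) (u : ST R n -> R) :
  {within @cyl R n T, continuous u} -> 0 <= t0 <= T -> 0 < e ->
  exists2 del : R, 0 < del & forall s, 0 <= s <= T -> `|s - t0| < del ->
    `|u (0, s) - u (0, t0)| < e.
Proof.
move=> hc ht e0.
have c0 : @cyl R n T (0, t0) by split => //; rewrite enorm0 ler01.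
have := (subspace_continuousP _ _).1 hc _ c0.
move=> /cvgrPdist_lt /(_ e e0).
rewrite near_withinE.
case/nbhs_ballP => del del0 H.
exists del => // s hs hst.
have hb : ball ((0, t0) : ST R n) del (0, s).
  split; first exact: ballxx.
  by rewrite /ball /= distrC.
have c1 : @cyl R n T (0, s) by split => //; rewrite enorm0 ler01.
by have := H (0, s) hb c1; rewrite distrC.
Qed.

Lemma approx_below (R : realType) n (T t : R) (u : ST R n -> R) :
  {within @cyl R n T, continuous u} -> 0 < t -> t <= T ->
  exists s, [/\ 0 <= s, s < t & `|u (0, s) - u (0, t)| < 1].
Proof.
move=> hc t0 tT.
have [del del0 H] := @path_cont R n T t 1 u hc ltac:(by rewrite (ltW t0) tT) ltr01.
set r := Num.min t del.
have r0 : 0 < r by rewrite lt_min t0 del0.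
have rt : r <= t by rewrite ge_min lexx.
have rd : r <= del by rewrite ge_min lexx orbT.
exists (t - r / 2); split; [lra | lra | ].
apply: H; first by apply/andP; split; lra.
have -> : t - r / 2 - t = - (r / 2) by ring.
rewrite normrN ger0_norm; lra.
Qed.

Unset Implicit Arguments.

Theorem lemma3p4 (R : realType) (L : R) (hL : 0 < L) :
  exists C : R, forall (n : nat) (p M0 : R) (u : ST R n -> R),
    (1 <= n)%N -> 1 < p -> 0 < M0 ->
    let T := (4 * n%:R + M0)^-1 in
    {within @cyl R n T, continuous u} ->
    (forall z, @cyl R n T z -> 0 <= u z) ->
    visc_bounded p M0 u [set z | @cyl_int R n T z /\ 1 < u z] ->
    (forall (x y : 'rV[R]_n) (t : R), enorm x <= 1 -> enorm y <= 1 ->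
       0 <= t <= T -> `|u (x, t) - u (y, t)| <= L * enorm (x - y)) ->
    forall t : R, 0 <= t <= T -> `|u (0, t) - u (0, 0)| <= C.
Proof.
exists (3 * L + 6).
move=> n p M0 u hn hp hM T hc hpos [hsub hsup] hlip t /andP[t0 tT].
have hT : T = (4 * n%:R + M0)^-1 by [].
have T0 : 0 < T by rewrite hT invr_gt0; have : (0 : R) <= n%:R by []; lra.
have c00 : @cyl R n T (0, 0) by split; [rewrite enorm0 ler01 | rewrite lexx /= ltW].
have u00 := hpos _ c00.
have c0t : @cyl R n T (0, t) by split; [rewrite enorm0 ler01 | rewrite t0 tT].
have u0t := hpos _ c0t.
rewrite ler_norml; apply/andP; split; last first.
  case: (eqVneq t 0) => [->|tn0]; first by rewrite subrr; lra.
  have tpos : 0 < t by rewrite lt_neqAle eq_sym tn0 t0.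
  have [s [s0 st hs]] := approx_below hc tpos tT.
  have := @upper R n p M0 L T t s u hn hp hM hL hT hc hpos hsub hlip tpos tT ltac:(by rewrite s0 st).
  move: hs; rewrite ltr_norml => /andP[h1 h2]; lra.
set a := u (0, 0).
case: (lerP a (3 * L + 6)) => ha; first lra.
set beta := a - (2 * L + 5).
case: (lerP (u (0, t)) beta) => hb; last by rewrite /beta in hb; lra.
exfalso.
set Z := [set s : R | 0 <= s <= T /\ u (0, s) <= beta].
have Zt : Z t by split => //; rewrite t0 tT.
have hlb : lbound Z 0 by move=> s [/andP[s0 _] _].
have hZ : has_inf Z by split; [exists t | exists 0].
set t1 := inf Z.
have t1ge : 0 <= t1 by apply: lb_le_inf => //; exists t.
have hlb2 : has_lbound Z by exists 0.
have t1le : t1 <= t by apply: (ge_inf hlb2) Zt.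
have t1T : t1 <= T by apply: le_trans t1le tT.
have ut1 : u (0, t1) < beta + 1.
  have [del del0 H] := @path_cont R n T t1 1 u hc ltac:(by rewrite t1ge t1T) ltr01.
  have [s Zs sd] := inf_adherent del0 hZ.
  have Zs2 := Zs; case: Zs2 => /andP[s0 sT] us.
  have s1 : t1 <= s by apply: (ge_inf hlb2).
  have := H s ltac:(by rewrite s0 sT) ltac:(by rewrite ger0_norm ?subr_ge0 //; lra).
  rewrite ltr_norml => /andP[h1 h2]; lra.
have t1pos : 0 < t1.
  rewrite lt_neqAle t1ge andbT; apply/eqP => t1E.
  move: ut1; rewrite -t1E -/a /beta; lra.
have hbig : forall x r, enorm x <= 1 -> 0 <= r < t1 -> 1 < u (x, r).
  move=> x r hx /andP[r0 rt].
  have ur : beta < u (0, r).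
    rewrite ltNge; apply/negP => hr.
    have : t1 <= r by apply: (ge_inf hlb2); split => //; rewrite r0 /= (le_trans (ltW rt) t1T).
    lra.
  have e01 : enorm (0 : 'rV[R]_n) <= 1 by rewrite enorm0 ler01.
  have := hlip x 0 r hx e01; rewrite subr0 r0 /= (le_trans (ltW rt) t1T) => /(_ isT).
  rewrite ler_norml => /andP[h1 h2].
  have : L * enorm x <= L by apply: ler_piMr => //; exact: ltW.
  rewrite /beta in ur; lra.
have [s [s0 st hs]] := approx_below hc t1pos t1T.
have := @lower R n p M0 L T t1 s u hn hp hM hL hT hc hpos hsup hlip t1pos t1T ltac:(by rewrite s0 st) hbig.
move: hs; rewrite ltr_norml => /andP[h1 h2].
rewrite -/a /beta in ut1 *; lra.
Qed.
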